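(* There exists an absolute constant $C$ such that the following holds. Let $G$ be a graph on $n$ vertices, let $0<\delta\le 1/2$, and let $s,m,b$ be positive integers with $m\le b\le \delta s$. Let $\mathcal{S}^+(s,m,b)$ be the collection of all ordered pairs $(S,F)$ where $S\in\mathcal{S}(s,m,b)$ and $F$ is a set of $m-1$ unordered pairs of vertices of $S$ such that adding the pairs in $F$ as edges to $G[S]$ yields a connected graph. Then $$|\mathcal{S}^+(s,m,b)|\le n^m\exp\big(C\delta\log(1/\delta)\,s\big).$$
   Context: $\mathcal{S}(s,m,b)$ is the collection of all sets $S\subseteq V(G)$ with $|S|=s$ such that $G[S]$ has exactly $m$ connected components $S_1,\dots,S_m$ and $\sum_{i=1}^m|N_G(S_i)|=b$, where $N_G(A)$ is the set of vertices in $V(G)\setminus A$ having a neighbor in $A$ and $G[S]$ is the induced subgraph. *)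

(* Defs.v *)
From mathcomp Require Import all_boot.
Set Implicit Arguments. Unset Strict Implicit. Unset Printing Implicit Defensive.

Section Graphs.
Variable T : finType.
(* a simple graph on T : symmetric, irreflexive adjacency relation e *)
Variable e : rel T.

Definition induced_rel (S : {set T}) : rel T :=
  fun x y => [&& x \in S, y \in S & e x y].

Definition comp_of (S : {set T}) (x : T) : {set T} :=
  [set y in S | connect (induced_rel S) x y].

Definition components (S : {set T}) : {set {set T}} :=
  [set comp_of S x | x in S].

Definition nbhd (A : {set T}) : {set T} :=
  [set v | (v \notin A) && [exists u in A, e u v]].

Definition inSsmb (s m b : nat) (S : {set T}) : bool :=
  [&& #|S| == s, #|components S| == m &
      \sum_(C in components S) #|nbhd C| == b].

Definition aug_rel (S : {set T}) (F : {set {set T}}) : rel T :=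
  fun x y => induced_rel S x y || [&& x \in S, y \in S & [set x; y] \in F].

Definition inSplus (s m b : nat) (p : {set T} * {set {set T}}) : bool :=
  let: (S0, F0) := p in
  [&& inSsmb s m b S0,
      #|F0| == m.-1,
      [forall f in F0, (#|f| == 2) && (f \subset S0)] &
      [forall x in S0, forall y in S0, connect (aug_rel S0 F0) x y]].

Definition Splus (s m b : nat) : {set {set T} * {set {set T}}} :=
  [set p | inSplus s m b p].

End Graphs.

(* Main.v *)
Require Import Defs.
From mathcomp Require Import all_boot.
From Stdlib Require Import Reals.
From Stdlib Require Import Lra Lia Factorial.

Section RealPart.
Local Open Scope R_scope.
Lemma term_nonneg x i : 0 <= x -> 0 <= / INR (fact i) * x ^ i.
Proof.
intro hx. apply Rmult_le_pos.
- left. apply Rinv_0_lt_compat. apply lt_0_INR. apply lt_O_fact.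
- apply pow_le; auto.
Qed.

Lemma exp_ge_term x j : 0 <= x -> x ^ j / INR (fact j) <= exp x.
Proof.
intro hx. unfold exp. destruct (exist_exp x) as [l H]. simpl.
assert (G : Un_growing (fun n => sum_f_R0 (fun i => / INR (fact i) * x ^ i) n)).
{ intro n. pose proof (term_nonneg x (S n) hx). cbn beta. rewrite tech5. lra. }
pose proof (growing_ineq _ l G H j) as g.
eapply Rle_trans; [|exact g].
destruct j as [|k].
- simpl. lra.
- rewrite tech5.
  pose proof (cond_pos_sum (fun i => / INR (fact i) * x ^ i) k (fun i => term_nonneg x i hx)).
  unfold Rdiv. rewrite Rmult_comm. lra.
Qed.

Lemma pow_bound x d j : 0 <= x -> 0 < d ->
  x ^ j <= INR (fact j) * ((1 / d) ^ j * exp (d * x)).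
Proof.
intros hx hd.
pose proof (exp_ge_term (d * x) j) as H.
assert (hdx : 0 <= d * x) by nra.
specialize (H hdx).
assert (hf : 0 < INR (fact j)) by (apply lt_0_INR; apply lt_O_fact).
assert (E : x ^ j = (1 / d) ^ j * (d * x) ^ j).
{ rewrite <- Rpow_mult_distr. f_equal. field. lra. }
rewrite E.
assert (hp : 0 <= (1/d)^j) by (apply pow_le; left; apply Rdiv_lt_0_compat; lra).
assert ((d * x) ^ j <= INR (fact j) * exp (d * x)).
{ unfold Rdiv in H. apply (Rmult_le_compat_l (INR (fact j))) in H; [|lra].
  rewrite <- Rmult_assoc, (Rmult_comm (INR (fact j))), Rmult_assoc, Rinv_r in H; lra. }
nra.
Qed.

Lemma ln_le' x y : 0 < x -> x <= y -> ln x <= ln y.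
Proof.
intros hx hxy. destruct (Rle_lt_or_eq_dec x y hxy) as [h|h].
- left. apply ln_increasing; auto.
- subst. lra.
Qed.

Lemma ln2_half : 1/2 <= ln 2.
Proof.
assert (h : exp (1/2) <= 2).
{ pose proof exp_le_3. assert (E : exp 1 = exp (1/2) * exp (1/2)) by (rewrite <- exp_plus; f_equal; lra).
  pose proof (exp_pos (1/2)). nra. }
rewrite <- (ln_exp (1/2)). apply ln_le'; [apply exp_pos|exact h].
Qed.

Lemma exp_le' x y : x <= y -> exp x <= exp y.
Proof.
intro h. destruct (Rle_lt_or_eq_dec x y h) as [h'|h'].
- left. apply exp_increasing; auto.
- subst. lra.
Qed.

Lemma core (N SC Cb Cj n s d : R) (m b j : nat) :
 0 < d -> d <= 1/2 -> 0 <= n -> 0 <= s -> m = S j -> le m b -> INR b <= d * s ->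
 0 <= SC -> 0 <= Cb -> 0 <= Cj ->
 N <= SC * Cb * Cj ->
 SC * INR (fact m) <= INR (S m) * n ^ m ->
 Cb * INR (fact b) <= (s + INR b) ^ b ->
 Cj * INR (fact j) <= (s * s) ^ j ->
 N <= n ^ m * exp (13 * d * ln (1/d) * s).
Proof.
intros hd hd2 hn hs hmj hmb hbs hSC hCb hCj hN h1 h2 h3.
set (F := INR (fact j)).
assert (hF : 0 < F) by (apply lt_0_INR; apply lt_O_fact).
assert (hFm : INR (fact m) = INR m * F).
{ subst m. unfold F. rewrite fact_simpl mult_INR. reflexivity. }
assert (hm1 : 1 <= INR m) by (subst m; rewrite S_INR; pose proof (pos_INR j); lra).
set (L := ln (1/d)).
assert (hid : 2 <= 1/d) by (assert (E: d * (1/d) = 1) by (field; lra); nra).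
assert (hL : 1/2 <= L).
{ unfold L. eapply Rle_trans; [apply ln2_half|]. apply ln_le'; lra. }
assert (hnm : 0 <= n ^ m) by (apply pow_le; auto).
set (Q := (1/d)^j * exp (d * s)).
assert (hQ : 0 <= Q).
{ unfold Q. apply Rmult_le_pos; [apply pow_le; lra| left; apply exp_pos]. }
assert (eSC : SC * F <= INR (S m) * n ^ m).
{ rewrite hFm in h1. assert (0 <= SC * F * (INR m - 1)) by (apply Rmult_le_pos; [apply Rmult_le_pos; lra|lra]). nra. }
assert (eS : s ^ j <= F * Q) by (unfold F, Q; apply pow_bound; lra).
assert (eCj : Cj * F <= (F * Q) * (F * Q)).
{ rewrite Rpow_mult_distr in h3.
  assert (0 <= s ^ j) by (apply pow_le; auto).
  eapply Rle_trans; [exact h3|]. simpl. nra. }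
assert (eCj' : Cj <= F * (Q * Q)).
{ apply (Rmult_le_reg_r F); auto. nra. }
assert (eCb : Cb <= (1/d)^b * exp (d * (s + INR b))).
{ pose proof (pow_bound (s + INR b) d b) as P.
  assert (0 <= s + INR b) by (pose proof (pos_INR b); lra).
  specialize (P H hd).
  assert (hFb : 0 < INR (fact b)) by (apply lt_0_INR; apply lt_O_fact).
  apply (Rmult_le_reg_r (INR (fact b))); auto. nra. }
assert (eSCCj : SC * Cj <= INR (S m) * n ^ m * (Q * Q)).
{ apply (Rmult_le_reg_r F); auto.
  assert (A1: SC * F * Cj <= INR (S m) * n^m * Cj) by (apply Rmult_le_compat_r; auto).
  assert (A2: INR (S m) * n^m * Cj <= INR (S m) * n^m * (F*(Q*Q))) by (apply Rmult_le_compat_l; [apply Rmult_le_pos; [apply pos_INR|auto]|auto]).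
  replace (SC*Cj*F) with (SC*F*Cj) by ring. replace (INR (S m) * n ^ m * (Q * Q) * F) with (INR (S m) * n^m * (F*(Q*Q))) by ring. lra. }
assert (eN : N <= INR (S m) * n ^ m * (Q * Q) * ((1/d)^b * exp (d * (s + INR b)))).
{ eapply Rle_trans; [exact hN|].
  replace (SC * Cb * Cj) with ((SC * Cj) * Cb) by ring.
  assert (0 <= SC * Cj) by nra.
  apply Rmult_le_compat; auto. }
eapply Rle_trans; [exact eN|].
assert (em : INR (S m) <= exp (INR m)) by (rewrite S_INR; pose proof (exp_ineq1_le (INR m)); lra).
assert (epow : (1/d)^j * (1/d)^j * (1/d)^b <= exp (INR (Nat.mul 3 b) * L)).
{ rewrite <- !pow_add. eapply Rle_trans.
  - apply Rle_pow with (n := Nat.mul 3 b); [lra|lia].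
  - unfold L. rewrite <- ln_pow by lra. rewrite exp_ln; [lra|apply pow_lt; lra]. }
assert (ebig : INR (S m) * (Q * Q) * ((1/d)^b * exp (d * (s + INR b)))
   <= exp (INR m) * exp (INR (Nat.mul 3 b) * L) * (exp (d*s) * exp (d*s) * exp (d * (s + INR b)))).
{ unfold Q.
  replace ((INR (S m)) * ((1 / d) ^ j * exp (d * s) * ((1 / d) ^ j * exp (d * s))) *
     ((1 / d) ^ b * exp (d * (s + INR b))))
   with (INR (S m) * ((1/d)^j * (1/d)^j * (1/d)^b) * (exp (d*s) * exp (d*s) * exp (d * (s + INR b)))) by ring.
  assert (0 <= exp (d*s) * exp (d*s) * exp (d * (s + INR b))).
  { pose proof (exp_pos (d*s)); pose proof (exp_pos (d * (s + INR b))). nra. }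
  apply Rmult_le_compat_r; auto.
  apply Rmult_le_compat; auto.
  - pose proof (pos_INR (S m)); lra.
  - assert (0 <= (1/d)^j) by (apply pow_le; lra).
    assert (0 <= (1/d)^b) by (apply pow_le; lra). nra. }
rewrite <- !exp_plus in ebig.
assert (eexp : exp (INR m + INR (Nat.mul 3 b) * L + (d * s + d * s + d * (s + INR b)))
   <= exp (13 * d * L * s)).
{ apply exp_le'. rewrite mult_INR. simpl (INR 3).
  assert (hmb' : INR m <= INR b) by (apply le_INR; auto).
  assert (hb0 : 0 <= INR b) by apply pos_INR.
  assert (t1 : INR b * L <= d * s * L) by nra.
  assert (t2 : d * INR b <= d * s) by nra.
  assert (t3 : d * s * (1/2) <= d * s * L) by nra.
  lra. }
fold L.
replace (INR (S m) * n ^ m * (Q * Q) * ((1 / d) ^ b * exp (d * (s + INR b))))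
  with (n ^ m * (INR (S m) * (Q * Q) * ((1 / d) ^ b * exp (d * (s + INR b))))) by ring.
apply Rmult_le_compat_l; auto. lra.
Qed.
End RealPart.
From mathcomp Require Import ssrnat.
Set Implicit Arguments. Unset Strict Implicit. Unset Printing Implicit Defensive.

Lemma card_bigcup_le (I T : finType) (P : pred I) (F : I -> {set T}) :
  #|\bigcup_(i | P i) F i| <= \sum_(i | P i) #|F i|.
Proof.
apply: (big_ind2 (fun (A : {set T}) (n : nat) => #|A| <= n)); first by rewrite cards0.
  move=> A1 A2 n1 n2 h1 h2; apply: leq_trans (leq_card_setU _ _) _.
  exact: leq_add.
by [].
Qed.

Section Fam.
Variable T : finType.
Variable e : rel T.

Definition famP (R X : {set T}) (a k : nat) (A : {set T}) : bool :=
  [&& R \subset A, [disjoint A & X], X \subset nbhd e A,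
      #|A| == #|R| + a, #|nbhd e A| <= #|X| + k &
      [forall y in A, [exists r in R, connect (induced_rel e A) r y]]].

Definition Fam R X a k := [set A | famP R X a k A].

Lemma closed_R (R X A : {set T}) :
  [disjoint A & X] -> nbhd e R \subset X ->
  forall r y, r \in R -> connect (induced_rel e A) r y -> y \in R.
Proof.
move=> dAX sRX r y rR /connectP[p pth ->].
elim: p r rR pth => [|z p IH] r rR //= /andP[/and3P[rA zA erz] pth].
apply: IH pth; apply: contraT => zR.
have zN : z \in nbhd e R by rewrite inE zR /=; apply/existsP; exists r; rewrite rR.
have zX := subsetP sRX _ zN.
by move: dAX; rewrite disjoint_sym => /disjointFr/(_ zX); rewrite zA.
Qed.

Lemma fam_bound n : forall a k R X, a + k = n -> #|Fam R X a k| <= 'C(a + k, a).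
Proof.
elim: n => [|n IH] a k R X.
- case: a => // ; case: k => // _.
  rewrite bin0; apply: (@leq_trans #|[set R]|); last by rewrite cards1.
  apply: subset_leq_card; apply/subsetP => A; rewrite !inE => /and5P[sRA _ _ /eqP cA _].
  rewrite eq_sym eqEcard sRA cA addn0 leqnn //.
case: a => [|a] Hn.
- rewrite bin0; apply: (@leq_trans #|[set R]|); last by rewrite cards1.
  apply: subset_leq_card; apply/subsetP => A; rewrite !inE => /and5P[sRA _ _ /eqP cA _].
  rewrite eq_sym eqEcard sRA cA addn0 leqnn //.
case: (pickP [pred u in nbhd e R :\: X]) => [u /= uP|none].
- move: uP; rewrite !inE => /andP[uX /andP[uR /existsP[r /andP[rR eru]]]].
  have key : forall A, A \in Fam R X a.+1 k ->
     (A \in Fam (u |: R) X a k) || ((u \notin A) && (0 < k) && (A \in Fam R (u |: X) a.+1 k.-1)).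
    move=> A; rewrite inE => /and5P[sRA dAX sXN /eqP cA /andP[cN con]]; rewrite !inE /famP.
    case uA: (u \in A) => /=.
      rewrite orbF; apply/and5P; split.
      + by rewrite subUset sub1set uA sRA.
      + exact: dAX.
      + exact: sXN.
      + by rewrite cardsU1 uR cA addnS.
      apply/andP; split => //; apply/forallP => y; apply/implyP => yA.
      case/existsP: (implyP (forallP con y) yA) => r' /andP[r'R cr'].
      by apply/existsP; exists r'; rewrite inE r'R orbT.
    have uN : u \in nbhd e A.
      by rewrite inE uA /=; apply/existsP; exists r; rewrite (subsetP sRA _ rR).
    have cuX : #|u |: X| = #|X|.+1 by rewrite cardsU1 uX.
    have kpos : 0 < k.
      have := subset_leq_card (_ : u |: X \subset nbhd e A).
      rewrite cuX => /(_ _)/leq_trans/(_ cN).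
      by rewrite subUset sub1set uN sXN => /(_ isT); rewrite -addn1 leq_add2l.
    apply/orP; right; apply/and5P; split => //.
    + rewrite disjoints_subset; apply/subsetP => z zA; rewrite !inE negb_or (disjointFr dAX zA) andbT; by apply: contraTneq zA => ->; rewrite uA.
    + by rewrite subUset sub1set uN sXN.
    + by rewrite cA eqxx cuX addSnnS prednK // cN con.
  case: k Hn key => [|k] Hn key.
    rewrite addn0 binn; apply: leq_trans (_ : #|Fam (u |: R) X a 0| <= 1).
      apply: subset_leq_card; apply/subsetP => A /key.
      by rewrite ltnn andbF orbF.
    by have := IH a 0 (u |: R) X; rewrite addn0 binn; apply; move: Hn; rewrite !addn0 => -[].
  apply: (@leq_trans (#|Fam (u |: R) X a k.+1| + #|Fam R (u |: X) a.+1 k|)).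
    apply: leq_trans (leq_card_setU _ _); apply: subset_leq_card; apply/subsetP => A /key.
    rewrite !inE => /orP[H|/andP[_ H]]; [by rewrite H | by rewrite H orbT].
  rewrite [a.+1 + k.+1]addSn binS addnC; apply: leq_add.
    by rewrite -addSnnS; apply: IH; move: Hn; rewrite addSn addnS => -[].
  by apply: IH; move: Hn; rewrite addSn => -[].
- have eqR : forall A, A \in Fam R X a.+1 k -> A = R.
    move=> A; rewrite inE => /and5P[sRA dAX _ _ /andP[_ con]].
    apply/eqP; rewrite eq_sym eqEsubset sRA /=; apply/subsetP => y yA.
    case/existsP: (implyP (forallP con y) yA) => r /andP[rR cr].
    apply: (closed_R dAX _ rR cr); apply/subsetP => z zN.
    by apply: contraT => zX; move: (none z); rewrite /= in_setD zX zN.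
  apply: (@leq_trans #|[set R]|); last by rewrite cards1 bin_gt0 leq_addr.
  by apply: subset_leq_card; apply/subsetP => A /eqR ->; rewrite inE.
Qed.
End Fam.
Section S.
Variable T : finType.
Variable e : rel T.
Hypothesis esym : symmetric e.

Definition pk (C : {set T}) : {set T} :=
  if [pick y in C] is Some y then [set y] else set0.

Definition rootsOf (S : {set T}) := \bigcup_(C in components e S) pk C.

Lemma induced_sym S : symmetric (induced_rel e S).
Proof. by move=> x y; rewrite /induced_rel esym andbCA. Qed.

Lemma roots_card S : #|rootsOf S| <= #|components e S|.
Proof.
apply: leq_trans (card_bigcup_le _ _) _.
rewrite -sum1_card; apply: leq_sum => C _; rewrite /pk.
by case: pickP => [y _|_]; rewrite ?cards1 ?cards0.
Qed.

Lemma comp_sub S x : comp_of e S x \subset S.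
Proof. by apply/subsetP => y; rewrite inE => /andP[]. Qed.

Lemma roots_sub S : rootsOf S \subset S.
Proof.
apply/bigcupsP => C /imsetP[x xS ->]; rewrite /pk.
case: pickP => [y yC|_]; last exact: sub0set.
by rewrite sub1set; apply: (subsetP (comp_sub S x)).
Qed.

Lemma roots_con (S : {set T}) y : y \in S -> exists2 r, r \in rootsOf S & connect (induced_rel e S) r y.
Proof.
move=> yS; set C := comp_of e S y.
have CC : C \in components e S by apply/imsetP; exists y.
have yC : y \in C by rewrite inE yS connect0.
move Hp: [pick z in C] => o; case: o Hp => [r|] Hp; last first.
  by move: Hp; case: pickP => // /(_ y); rewrite yC.
have rC : r \in C by move: Hp; case: pickP => // r' rC' [<-].
exists r.
  by apply/bigcupP; exists C => //; rewrite /pk Hp set11.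
move: rC; rewrite inE => /andP[_ cyr].
by rewrite (sym_connect_sym (induced_sym S)).
Qed.

Lemma nbhd_le (S : {set T}) : #|nbhd e S| <= \sum_(C in components e S) #|nbhd e C|.
Proof.
apply: leq_trans (card_bigcup_le _ _); apply: subset_leq_card.
apply/subsetP => v; rewrite inE => /andP[vS /existsP[u /andP[uS euv]]].
apply/bigcupP; exists (comp_of e S u); first by apply/imsetP; exists u.
rewrite inE; apply/andP; split.
  by apply: contra vS; apply/subsetP/comp_sub.
by apply/existsP; exists u; rewrite inE uS connect0.
Qed.

End S.
Section S2.
Variable T : finType.
Variable e : rel T.
Hypothesis esym : symmetric e.

Lemma Ssmb_in s m b (S : {set T}) : inSsmb e s m b S ->
  S \in \bigcup_(R : {set T} | #|R| <= m) Fam e R set0 (s - #|R|) b.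
Proof.
case/and3P => /eqP cS /eqP cC /eqP sN.
apply/bigcupP; exists (rootsOf e S); first by rewrite -cC roots_card.
have rs := roots_sub e S.
rewrite inE; apply/and5P; split => //.
- by rewrite disjoints_subset setC0 subsetT.
- exact: sub0set.
- by rewrite subnKC -?cS ?eqxx //; apply: subset_leq_card.
apply/andP; split.
  by rewrite cards0 add0n -sN nbhd_le.
apply/forallP => y; apply/implyP => yS.
by case: (roots_con esym yS) => r rR cr; apply/existsP; exists r; rewrite rR.
Qed.

Lemma Ssmb_bound s m b :
  #|[set S | inSsmb e s m b S]| <= (\sum_(j < m.+1) 'C(#|T|, j)) * 'C(s + b, b).
Proof.
apply: (@leq_trans #|\bigcup_(R : {set T} | #|R| <= m) Fam e R set0 (s - #|R|) b|).
  by apply: subset_leq_card; apply/subsetP => S; rewrite inE; apply: Ssmb_in.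
apply: leq_trans (card_bigcup_le _ _) _.
apply: (@leq_trans (\sum_(R : {set T} | #|R| <= m) 'C(s + b, b))).
  apply: leq_sum => R _; apply: leq_trans (@fam_bound T e _ (s - #|R|) b R set0 (erefl _)) _.
  have -> : 'C(s - #|R| + b, s - #|R|) = 'C(s - #|R| + b, b) by rewrite -(bin_sub (leq_addl (s - #|R|) b)) addnK.
  by apply: leq_bin2l; rewrite leq_add2r leq_subr.
rewrite sum_nat_const leq_mul2r; apply/orP; right.
apply: (@leq_trans #|\bigcup_(j < m.+1) [set R : {set T} | #|R| == j]|).
  apply: subset_leq_card; apply/subsetP => R; move=> Rm.
  by apply/bigcupP; exists (Ordinal (Rm : #|R| < m.+1)) => //; rewrite inE.
apply: leq_trans (card_bigcup_le _ _) _.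
by apply: leq_sum => j _; rewrite card_draws.
Qed.

Definition P2 (S : {set T}) := [set f : {set T} | f \subset S & #|f| == 2].
Definition Fset (k : nat) (S : {set T}) := [set F : {set {set T}} | F \subset P2 S & #|F| == k].

Lemma Splus_bound s m b :
  #|Splus e s m b| <= #|[set S | inSsmb e s m b S]| * 'C('C(s, 2), m.-1).
Proof.
apply: (@leq_trans #|\bigcup_(S in [set S | inSsmb e s m b S]) [set (S, F) | F in Fset m.-1 S]|).
  apply: subset_leq_card; apply/subsetP => -[S F]; rewrite inE => /and4P[hS /eqP cF hF _].
  apply/bigcupP; exists S; first by rewrite inE.
  apply/imsetP; exists F => //; rewrite inE cF eqxx andbT.
  apply/subsetP => f fF; have /andP[c2 sub] := implyP (forallP hF f) fF.
  by rewrite inE sub c2.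
apply: leq_trans (card_bigcup_le _ _) _.
rewrite -sum_nat_const; apply: leq_sum => S; rewrite inE => /and3P[/eqP cS _ _].
apply: leq_trans (leq_imset_card _ _) _.
by rewrite cards_draws cards_draws cS.
Qed.

Lemma Splus_s s m b : 0 < #|Splus e s m b| -> s <= #|T|.
Proof.
case/card_gt0P => -[S F]; rewrite inE => /and4P[/and3P[/eqP <- _ _] _ _ _].
exact: max_card.
Qed.
End S2.
Lemma pow_base_le a c k : a <= c -> a ^ k <= c ^ k.
Proof. by case: k => [//|k] h; rewrite leq_exp2r. Qed.

Lemma ffact_le_pow n k : n ^_ k <= n ^ k.
Proof.
elim: k n => [//|k IH] n; rewrite ffactnS expnS leq_mul2l; apply/orP; right.
apply: leq_trans (IH _) _; apply: pow_base_le; exact: leq_pred.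
Qed.

Lemma bin_fact_le n k : 'C(n, k) * k`! <= n ^ k.
Proof. by rewrite bin_ffact ffact_le_pow. Qed.

Lemma pow_fact_le n j m : j <= m -> m <= n -> n ^ j * m`! <= n ^ m * j`!.
Proof.
move=> jm; elim: m jm => [|m IH]; first by rewrite leqn0 => /eqP ->.
rewrite leq_eqVlt => /orP[/eqP <- //|]; rewrite ltnS => jm mn.
have := IH jm (ltnW mn).
rewrite factS expnS => h.
rewrite mulnCA (mulnC n) -mulnA.
apply: leq_trans (_ : m.+1 * (n ^ m * j`!) <= _).
  by rewrite leq_mul2l h orbT.
by rewrite mulnCA leq_mul2l leq_mul2r mn !orbT.
Qed.

Lemma bin_mfact_le n j m : j <= m -> m <= n -> 'C(n, j) * m`! <= n ^ m.
Proof.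
move=> jm mn.
have h1 := bin_fact_le n j.
have h2 := pow_fact_le jm mn.
have : 'C(n, j) * m`! * j`! <= n ^ m * j`!.
  apply: leq_trans h2; rewrite mulnAC leq_mul2r h1 orbT //.
by rewrite leq_mul2r; case/orP => //; rewrite eqn0Ngt fact_gt0.
Qed.

Lemma sum_bin_le n m : m <= n -> (\sum_(j < m.+1) 'C(n, j)) * m`! <= m.+1 * n ^ m.
Proof.
move=> mn; rewrite big_distrl /=.
apply: leq_trans (_ : \sum_(j < m.+1) n ^ m <= _).
  by apply: leq_sum => j _; apply: bin_mfact_le => //; rewrite -ltnS.
by rewrite sum_nat_const card_ord.
Qed.

Lemma INR_muln a c : INR (a * c) = (INR a * INR c)%R.
Proof. exact: mult_INR. Qed.
Lemma INR_addn a c : INR (a + c) = (INR a + INR c)%R.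
Proof. exact: plus_INR. Qed.
Lemma INR_expn a k : INR (a ^ k) = pow (INR a) k.
Proof. elim: k => [//|k IH]; by rewrite expnS INR_muln IH. Qed.
Lemma fact_eq k : k`! = Factorial.fact k.
Proof. by elim: k => [//|k IH]; rewrite factS IH. Qed.
Lemma le_INR' a c : a <= c -> (INR a <= INR c)%R.
Proof. by move/leP; apply: le_INR. Qed.

Theorem mainTheorem12 :
  exists C : R,
  forall (T : finType) (e : rel T),
    symmetric e -> irreflexive e ->
  forall (delta : R), (0 < delta)%R -> (delta <= 1 / 2)%R ->
  forall s m b : nat, (0 < s)%N -> (0 < m)%N -> (0 < b)%N ->
    (m <= b)%N -> (INR b <= delta * INR s)%R ->
    (INR #|Splus e s m b|
       <= pow (INR #|T|) m * exp (C * delta * ln (1 / delta) * INR s))%R.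
Proof.
exists 13%R => T e esym _ delta hd hd2 s m b hs hm hb hmb hbs.
case: (posnP #|Splus e s m b|) => [->|Npos].
  rewrite /=; apply: Rmult_le_pos; first by apply: pow_le; apply: pos_INR.
  by left; apply: exp_pos.
have sn := Splus_s Npos.
have bs : b <= s.
  apply/leP; apply: INR_le.
  have := pos_INR s => hs'; apply: Rle_trans hbs _; nra.
case: m hm hmb Npos => [//|j] _ hmb Npos.
have mn : j.+1 <= #|T| by apply: leq_trans sn; apply: leq_trans hmb bs.
set SC := \sum_(i < j.+2) 'C(#|T|, i).
set Cb := 'C(s + b, b).
set Cj := 'C('C(s, 2), j).
have hN : #|Splus e s j.+1 b| <= SC * Cb * Cj.
  apply: leq_trans (Splus_bound e s j.+1 b) _; rewrite leq_mul2r.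
  by apply/orP; right; apply: Ssmb_bound.
have h1 := sum_bin_le mn.
have h2 : Cb * b`! <= (s + b) ^ b by apply: bin_fact_le.
have h3 : Cj * j`! <= (s * s) ^ j.
  apply: leq_trans (bin_fact_le _ _) _; apply: pow_base_le.
  have := bin_fact_le s 2; rewrite (_ : 2`! = 2) // expnS expn1 => h.
  by apply: leq_trans h; rewrite leq_pmulr.
apply: (@core (INR #|Splus e s j.+1 b|) (INR SC) (INR Cb) (INR Cj) (INR #|T|) (INR s) delta j.+1 b j) => //.
- exact: pos_INR.
- exact: pos_INR.
- exact/leP.
- exact: pos_INR.
- exact: pos_INR.
- exact: pos_INR.
- by move/le_INR': hN; rewrite !INR_muln.
- by move/le_INR': h1; rewrite INR_muln fact_eq INR_muln INR_expn.
- by move/le_INR': h2; rewrite INR_muln fact_eq INR_expn INR_addn.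
- by move/le_INR': h3; rewrite INR_muln fact_eq INR_expn INR_muln.
Qed.
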